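(* Every $3$-regular graph $H$ on $n>6$ vertices satisfies $m(H)\le 4$.
   Context: All graphs are finite and simple. For graphs $G_1=(V,E_1)$, $G_2=(V,E_2)$, their symmetric difference is $(V,E_1\oplus E_2)$, where $E_1\oplus E_2$ is the set of edges in exactly one of $E_1,E_2$. A connectivity code for $H=(V,E)$ is a collection of distinct spanning subgraphs $(V,E')$, $E'\subseteq E$, such that the symmetric difference of any two distinct members is a connected graph on $V$; $m(H)$ is the maximum cardinality of a connectivity code for $H$. *)

(* Defs.v *)
From mathcomp Require Import all_boot.
Set Implicit Arguments. Unset Strict Implicit. Unset Printing Implicit Defensive.

(* A finite simple graph on vertex type T is given by its edge set
   E : {set {set T}}, every edge being a 2-element subset of T. *)
Definition simple_edges (T : finType) (E : {set {set T}}) : Prop :=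
  forall e, e \in E -> #|e| = 2.

Definition adj (T : finType) (E : {set {set T}}) : rel T :=
  fun x y => (x != y) && ([set x; y] \in E).

Definition connected_graph (T : finType) (E : {set {set T}}) : Prop :=
  forall x y : T, connect (adj E) x y.

Definition degree (T : finType) (E : {set {set T}}) (v : T) : nat :=
  #|[set e in E | v \in e]|.

Definition regular (T : finType) (E : {set {set T}}) (k : nat) : Prop :=
  forall v : T, degree E v = k.

Definition symdiff (T : finType) (E1 E2 : {set {set T}}) : {set {set T}} :=
  (E1 :\: E2) :|: (E2 :\: E1).

(* A connectivity code for H = (T, E): a collection C of (distinct, as C is
   a set) spanning subgraphs (T, E'), E' \subset E, such that the symmetric
   difference of any two distinct members is connected on T. *)
Definition connectivity_code (T : finType) (E : {set {set T}})
    (C : {set {set {set T}}}) : Prop :=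
  (forall E', E' \in C -> E' \subset E) /\
  (forall E1 E2, E1 \in C -> E2 \in C -> E1 != E2 ->
     connected_graph (symdiff E1 E2)).

(* Main.v *)
Require Import Defs.
From mathcomp Require Import all_boot.
From mathcomp Require Import zify.
Set Implicit Arguments. Unset Strict Implicit.

Definition reach (T : finType) (D : {set {set T}}) (r v : T) (n : nat) : bool :=
  [exists p : n.-tuple T, path (adj D) v p && (last v p == r)].

Lemma reach_ex (T : finType) (D : {set {set T}}) (r : T) :
  connected_graph D -> forall v, exists n, reach D r v n.
Proof.
move=> Hc v; have /connectP [p pP lp] := Hc v r.
exists (size p); apply/existsP; exists (in_tuple p).
by rewrite /= pP -lp eqxx.
Qed.

Definition dist (T : finType) (D : {set {set T}}) (r : T)
  (Hc : connected_graph D) (v : T) : nat := ex_minn (reach_ex r Hc v).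

Lemma dist_step (T : finType) (D : {set {set T}}) (r : T)
  (Hc : connected_graph D) v : v != r ->
  exists2 w, adj D v w & dist r Hc w < dist r Hc v.
Proof.
rewrite /dist; case: ex_minnP => m /existsP [[s /= /eqP sz]] /andP [pP /eqP lp] _.
case: s sz pP lp => [|w s] /= sz pP lp vr.
  by rewrite lp eqxx in vr.
move/andP: pP => [vw wP]; exists w => //.
case: ex_minnP => m' _ minm'.
have : reach D r w (size s).
  by apply/existsP; exists (in_tuple s); rewrite /= wP lp eqxx.
by move/minm'; rewrite -sz.
Qed.

Lemma conn_card (T : finType) (D : {set {set T}}) (r : T) :
  connected_graph D -> #|T| <= #|D|.+1.
Proof.
move=> Hc.
pose f v := if [pick w | adj D v w && (dist r Hc w < dist r Hc v)] is Some w
            then w else v.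
have fP v : v != r -> adj D v (f v) && (dist r Hc (f v) < dist r Hc v).
  move=> vr; rewrite /f; case: pickP => [w -> //|H].
  have [w w1 w2] := dist_step Hc vr.
  by move: (H w); rewrite w1 w2.
pose g v := [set v; f v].
have inj : {in [set~ r] &, injective g}.
  move=> v v' vr v'r Hg; apply/eqP/negPn/negP => nvv.
  rewrite !in_setC1 in vr v'r.
  have : v \in g v' by rewrite -Hg /g set21.
  have : v' \in g v by rewrite Hg /g set21.
  rewrite /g !in_set2 (negbTE nvv) /= eq_sym (negbTE nvv) /= => /eqP e1 /eqP e2.
  have := fP _ vr; have := fP _ v'r; rewrite -e1 -e2 => /andP [_ h1] /andP [_ h2].
  by have := ltn_trans h1 h2; rewrite ltnn.
have sub : g @: [set~ r] \subset D.
  apply/subsetP => x /imsetP [v vr ->].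
  rewrite in_setC1 in vr.
  by have /andP [/andP [_ ->] _] := fP _ vr.
have := subset_leq_card sub; rewrite card_in_imset // cardsC1.
by case: #|T|.
Qed.

Lemma sum_neq (X : finType) (C : {set X}) (b : X -> bool) :
  \sum_(i in C) \sum_(j in C) (b i != b j : nat) =
  2 * (#|C :&: [set x | b x]| * #|C :\: [set x | b x]|).
Proof.
set P := [set x | b x].
have inner i : \sum_(j in C) (b i != b j : nat) =
   (~~ b i) * #|C :&: P| + b i * #|C :\: P|.
  rewrite (big_setID P) /=.
  rewrite (eq_bigr (fun=> (~~ b i : nat))); last first.
    by move=> j; rewrite !inE => /andP [_ ->]; case: (b i).
  rewrite [X in _ + X](eq_bigr (fun=> (b i : nat))); last first.
    by move=> j; rewrite !inE => /andP [/negbTE -> _]; case: (b i).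
  by rewrite !sum_nat_const mulnC [in X in _ + X]mulnC.
rewrite (eq_bigr _ (fun i _ => inner i)) (big_setID P) /=.
rewrite (eq_bigr (fun=> #|C :\: P|)); last first.
  by move=> j; rewrite !inE => /andP [_ ->] /=; rewrite ?mul0n ?mul1n ?addn0.
rewrite [X in _ + X](eq_bigr (fun=> #|C :&: P|)); last first.
  by move=> j; rewrite !inE => /andP [/negbTE -> _] /=; rewrite ?mul0n ?mul1n ?addn0.
rewrite !sum_nat_const.
by rewrite [X in _ + X]mulnC addnn mul2n.
Qed.

Lemma card_sd (T : finType) (E i j : {set {set T}}) : i \subset E -> j \subset E ->
  #|symdiff i j| = \sum_(e in E) ((e \in i) != (e \in j) : nat).
Proof.
move=> iE jE.
have sdE : symdiff i j \subset E.
  by rewrite /symdiff subUset !(subset_trans (subsetDl _ _)).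
transitivity (\sum_(e in E) (e \in symdiff i j : nat)).
  rewrite (big_setID (symdiff i j)) /= [X in _ + X]big1 ?addn0; last first.
    by move=> e; rewrite [e \in _ :\: _]inE => /andP [/negbTE -> _].
  rewrite (eq_bigr (fun=> 1)); last by move=> e; rewrite [e \in _ :&: _]inE => /andP [_ ->].
  by rewrite sum1_card (setIidPr sdE).
apply: eq_bigr => e _; rewrite /symdiff !inE.
by case: (e \in i); case: (e \in j).
Qed.

Lemma odd_sd (T : finType) (i j : {set {set T}}) :
  odd #|symdiff i j| = odd #|i| (+) odd #|j|.
Proof.
rewrite /symdiff cardsU.
have -> : (i :\: j) :&: (j :\: i) = set0.
  by apply/setP => x; rewrite !inE; case: (x \in i); case: (x \in j).
rewrite cards0 subn0 -(cardsID j i) -(cardsID i j) setIC !oddD.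
by case: (odd _); case: (odd _); case: (odd _).
Qed.

Lemma handshake (T : finType) (E : {set {set T}}) :
  simple_edges E -> regular E 3 -> 2 * #|E| = 3 * #|T|.
Proof.
move=> Hs Hr.
have H : \sum_(v : T) degree E v = 3 * #|T|.
  by rewrite (eq_bigr (fun=> 3)) // sum_nat_const mulnC.
rewrite -H.
have -> : \sum_(v : T) degree E v = \sum_(v : T) \sum_(e in E) (if v \in e then 1 else 0).
  apply: eq_bigr => v _; rewrite /degree -sum1dep_card.
  by rewrite big_mkcondr.
rewrite exchange_big /= (eq_bigr (fun=> 2)); last first.
  by move=> e eE; rewrite -big_mkcond /= sum1_card Hs.
by rewrite sum_nat_const mulnC.
Qed.

Lemma le12 a c : a + c = 5 -> 2 * (a * c) <= 12.
Proof.
move=> h; have : a <= 5 by rewrite -h leq_addr.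
have -> : c = 5 - a by rewrite -h addKn.
by case: a h => [|[|[|[|[|[|a]]]]]].
Qed.

Theorem mainTheorem13 (T : finType) (E : {set {set T}}) :
  simple_edges E -> regular E 3 -> 6 < #|T| ->
  forall C : {set {set {set T}}}, connectivity_code E C -> #|C| <= 4.
Proof.
move=> Hs Hr Hn C [Csub Cconn].
rewrite leqNgt; apply/negP => C5.
pose C' := [set x in take 5 (enum C)].
have C'C : C' \subset C.
  by apply/subsetP => x; rewrite inE => /mem_take; rewrite mem_enum.
have C'5 : #|C'| = 5.
  rewrite cardsE (card_uniqP _) ?take_uniq ?enum_uniq // size_takel //.
  by rewrite -cardE.
have HE := handshake Hs Hr.
have nodd : ~~ odd #|T|.
  have : odd (3 * #|T|) = odd (2 * #|E|) by rewrite HE.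
  by rewrite !oddM /= => ->.
have [r _] : exists r : T, r \in T.
  by apply/card_gt0P; apply: leq_trans Hn.
have sub x : x \in C' -> x \subset E.
  by move=> xC; apply: Csub; move/subsetP: C'C; apply.
pose n := #|T|.
pose Tot := \sum_(i in C') \sum_(j in C') #|symdiff i j|.
have up : Tot <= 12 * #|E|.
  rewrite /Tot.
  have -> : \sum_(i in C') \sum_(j in C') #|symdiff i j| =
      \sum_(i in C') \sum_(j in C') \sum_(e in E) ((e \in i) != (e \in j) : nat).
    apply: eq_bigr => i iC; apply: eq_bigr => j jC.
    by apply: card_sd; apply: sub.
  under eq_bigr => i _ do rewrite exchange_big.
  rewrite exchange_big /= mulnC -sum_nat_const.
  apply: leq_sum => e _.
  rewrite (sum_neq C' (fun x => e \in x)).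
  by apply: le12; rewrite cardsID.
have pair i j : i \in C' -> j \in C' ->
    (i != j) * (n - 1) + (odd #|i| == odd #|j|) <= #|symdiff i j| + (i == j).
  move=> iC jC; case: (eqVneq i j) => [->|nij].
    by rewrite eqxx /= mul0n add0n addn1.
  have h := conn_card r (Cconn i j (subsetP C'C _ iC) (subsetP C'C _ jC) nij).
  have od := odd_sd i j.
  have h' : n <= #|symdiff i j|.+1 := h.
  have nodd' : ~~ odd n := nodd.
  clear h nodd; rewrite -/n /=.
  case E1: (odd #|i| == odd #|j|) => /=; last by rewrite !addn0 mul1n leq_subLR add1n.
  have ev : ~~ odd #|symdiff i j| by rewrite od; move/eqP: E1 => ->; rewrite addbb.
  move: h'; rewrite leq_eqVlt => /orP [/eqP e|h].
    by move: nodd'; rewrite e /= ev.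
  rewrite addn0 mul1n subn1 addn1 prednK; first by rewrite -ltnS.
  exact: leq_trans Hn.
have low : \sum_(i in C') \sum_(j in C') ((i != j) * (n - 1) + (odd #|i| == odd #|j|))
           <= Tot + \sum_(i in C') \sum_(j in C') (i == j : nat).
  rewrite /Tot -big_split /=; apply: leq_sum => i iC.
  rewrite -big_split /=; apply: leq_sum => j jC; exact: pair.
have diag : \sum_(i in C') \sum_(j in C') (i == j : nat) = 5.
  rewrite -C'5 -sum1_card; apply: eq_bigr => i iC.
  rewrite (bigD1 i) //= eqxx big1 // => j /andP [_ ji].
  by rewrite eq_sym (negbTE ji).
have tot25 (b : {set {set T}} -> {set {set T}} -> bool) :
    \sum_(i in C') \sum_(j in C') (b i j : nat) +
    \sum_(i in C') \sum_(j in C') (~~ b i j : nat) = 25.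
  rewrite -big_split /= (eq_bigr (fun=> 5)); last first.
    move=> i _; rewrite -big_split /= -C'5 -sum1_card; apply: eq_bigr => j _.
    by case: (b i j).
  by rewrite sum_nat_const C'5.
have offd : \sum_(i in C') \sum_(j in C') (i != j : nat) = 20.
  have h := tot25 (fun i j => i == j); rewrite diag in h.
  by move: h; rewrite -[25]/(5 + 20) => /addnI.
have pneq : \sum_(i in C') \sum_(j in C') (odd #|i| != odd #|j| : nat) <= 12.
  rewrite (sum_neq C' (fun x => odd #|x|)).
  by apply: le12; rewrite cardsID.
have peq := tot25 (fun i j => odd #|i| == odd #|j|).
have L : \sum_(i in C') \sum_(j in C') ((i != j) * (n - 1) + (odd #|i| == odd #|j|))
   = 20 * (n - 1) + \sum_(i in C') \sum_(j in C') (odd #|i| == odd #|j| : nat).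
  under eq_bigr => i _ do rewrite big_split /= -big_distrl /=.
  by rewrite big_split /= -big_distrl /= offd.
rewrite L diag in low.
have Hn' : 6 < n := Hn.
have HE' : 2 * #|E| = 3 * n := HE.
move: peq pneq low up Hn' HE'; lia.
Qed.
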